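(* Let $a_0=0$ and let $a_1<a_2<\cdots$ be the increasing enumeration of the set $\{m\ge1:\ c_m=1\}$ (so that, for $m\ge1$, $c_m=1$ if and only if $m=a_n$ for some $n>0$). Then $a_1=1$, $a_2=2$, $a_3=7$, and for all $n\ge 1$: $$a_{4n}=a_{4n-1}+1,\quad a_{4n+1}=a_{4n-1}+2,\quad a_{4n+2}=a_{4n-1}+3,\quad a_{8n+3}=a_{8n}+7,\quad a_{8n+7}=4a_{4n+3}+3.$$
   Context: For $n\in\mathbb{N}$ let $s_2(n)$ be the sum of the binary digits of $n$ and $t_n=s_2(n)\bmod 2$ (the Prouhet–Thue–Morse sequence). Let $F(X)=\sum_{n\ge1}t_nX^n\in\mathbb{F}_2[[X]]$ and let $G(X)=\sum_{n\ge1}c_nX^n\in\mathbb{F}_2[[X]]$ be its compositional inverse, i.e. $F(G(X))=G(F(X))=X$. The $c_n$ are identified with integers in $\{0,1\}$. *)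

(* Defs.v *)
From mathcomp Require Import all_boot all_order all_algebra.
Set Implicit Arguments. Unset Strict Implicit. Unset Printing Implicit Defensive.
Import GRing.Theory.
Local Open Scope ring_scope.

Definition fps := nat -> 'F_2.

(* s_2(n): the sum of the binary digits of n (bit i of n is odd (n %/ 2^i);
   all bits of position >= n are zero). *)
Definition s2 (n : nat) : nat := (\sum_(i < n.+1) odd (n %/ 2 ^ i))%N.

Definition tm (n : nat) : nat := (s2 n %% 2)%N.

Definition Fser : fps := fun n => if n == 0%N then 0 else (tm n)%:R.

Definition trunc (B : fps) (n : nat) : {poly 'F_2} := \poly_(i < n.+1) B i.

(* Coefficient of X^n in the composition A(B(X)), for B with B 0 = 0:
   [X^n] A(B) = sum_{k=0}^{n} a_k [X^n] B^k. *)
Definition comp (A B : fps) : fps :=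
  fun n => \sum_(k < n.+1) A k * ((trunc B n) ^+ k)`_n.

Definition Xser : fps := fun n => if n == 1%N then 1 else 0.

Definition comp_inverse (F G : fps) : Prop :=
  G 0%N = 0 /\ (forall n, comp F G n = Xser n) /\ (forall n, comp G F n = Xser n).

Definition enumerates (c : fps) (a : nat -> nat) : Prop :=
  a 0%N = 0%N /\ (forall n, (a n < a n.+1)%N) /\
  (forall m, (1 <= m)%N -> (c m = 1 <-> exists2 n, (0 < n)%N & a n = m)).

(* Main.v *)
Require Import Defs.
From mathcomp Require Import all_boot all_order all_algebra.
From mathcomp Require Import ring zify.
Set Implicit Arguments. Unset Strict Implicit. Unset Printing Implicit Defensive.
Import GRing.Theory.
Local Open Scope ring_scope.

Lemma F2cases (x : 'F_2) : x = 0 \/ x = 1.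
Proof. by case: x => [[|[|]]] //= ?; [left|right]; apply/val_inj. Qed.

Lemma two0 : (2%:R : 'F_2) = 0.
Proof. by apply/eqP. Qed.

Lemma two0P : (2%:R : {poly 'F_2}) = 0.
Proof. by rewrite -(rmorph_nat (@polyC _)) two0. Qed.

Definition ceq (N : nat) (p q : {poly 'F_2}) := forall i, (i < N)%N -> p`_i = q`_i.

Lemma ceq_refl N p : ceq N p p. Proof. by []. Qed.
Lemma ceq_sym N p q : ceq N p q -> ceq N q p.
Proof. by move=> h i hi; rewrite h. Qed.
Lemma ceq_trans N p q r : ceq N p q -> ceq N q r -> ceq N p r.
Proof. by move=> h1 h2 i hi; rewrite h1 // h2. Qed.
Lemma ceqD N p p' q q' : ceq N p p' -> ceq N q q' -> ceq N (p + q) (p' + q').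
Proof. by move=> h1 h2 i hi; rewrite !coefD h1 // h2. Qed.
Lemma ceqMl N p p' r : ceq N p p' -> ceq N (p * r) (p' * r).
Proof.
move=> h i hi; rewrite !coefM; apply: eq_bigr => j _; rewrite h //.
by apply: leq_ltn_trans hi; rewrite -ltnS.
Qed.
Lemma ceqM N p p' q q' : ceq N p p' -> ceq N q q' -> ceq N (p * q) (p' * q').
Proof.
move=> h1 h2; apply: ceq_trans (ceqMl q h1) _.
rewrite mulrC [p' * q']mulrC; exact: ceqMl.
Qed.
Lemma ceqX N p p' k : ceq N p p' -> ceq N (p ^+ k) (p' ^+ k).
Proof. by move=> h; elim: k => [|k IH]; rewrite ?expr0 // !exprS; apply: ceqM. Qed.

Lemma ceq0E N p : ceq N p 0 -> p = drop_poly N p * 'X^N.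
Proof.
move=> h; rewrite -{1}(poly_take_drop N p).
suff -> : take_poly N p = 0 by rewrite add0r.
apply/polyP=> i; rewrite coef_take_poly coef0; case: ifP => // hi.
by rewrite h // coef0.
Qed.

Lemma ceq_compl N p p' (Q : {poly 'F_2}) : ceq N p p' -> Q`_0 = 0 -> ceq N (p \Po Q) (p' \Po Q).
Proof.
move=> h hQ i hi; apply/eqP; rewrite -subr_eq0 -coefB -comp_polyB.
have hd : ceq N (p - p') 0 by move=> j hj; rewrite coefB h // subrr coef0.
rewrite (ceq0E hd) comp_polyM comp_Xn_poly.
have -> : Q = drop_poly 1 Q * 'X.
  rewrite -{1}(poly_take_drop 1 Q) expr1.
  suff -> : take_poly 1 Q = 0 by rewrite add0r.
  by apply/polyP=> j; rewrite coef_take_poly coef0; case: j => //=.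
by rewrite exprMn mulrA coefMXn hi.
Qed.

Lemma ceq_compr N (p Q Q' : {poly 'F_2}) : ceq N Q Q' -> ceq N (p \Po Q) (p \Po Q').
Proof.
move=> h; elim/poly_ind: p => [|p c IH]; first by rewrite !comp_poly0.
rewrite !comp_polyD !comp_polyM !comp_polyX !comp_polyC.
by apply: ceqD => //; apply: ceqM.
Qed.

Lemma sqr_comp (p : {poly 'F_2}) : p ^+ 2 = p \Po 'X^2.
Proof.
elim/poly_ind: p => [|p c IH]; first by rewrite comp_poly0 expr0n.
have -> : (p * 'X + c%:P) ^+ 2 = p ^+ 2 * 'X^2 + (c * c)%:P + 2%:R * (p * 'X * c%:P).
  by rewrite polyCM; ring.
rewrite two0P mul0r addr0 IH comp_polyD comp_polyM comp_polyX comp_polyC.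
by case: (F2cases c) => ->; rewrite ?mul0r ?mul1r.
Qed.

Lemma coef_sqr (p : {poly 'F_2}) i :
  (p ^+ 2)`_i = if (2 %| i)%N then p`_(i %/ 2) else 0.
Proof. by rewrite sqr_comp coef_comp_poly_Xn. Qed.

Lemma coef_4 (p : {poly 'F_2}) i :
  (p ^+ 4)`_i = if (4 %| i)%N then p`_(i %/ 4) else 0.
Proof.
have -> : p ^+ 4 = (p ^+ 2) ^+ 2 by rewrite -exprM.
rewrite (sqr_comp (p ^+ 2)) (sqr_comp p) -comp_polyA comp_Xn_poly -exprM.
by rewrite coef_comp_poly_Xn.
Qed.

Lemma s2_ext n K : (n < K)%N -> s2 n = (\sum_(i < K) odd (n %/ 2 ^ i))%N.
Proof.
move=> hK; rewrite /s2 (big_ord_widen K (fun i => nat_of_bool (odd (n %/ 2 ^ i))) hK).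
rewrite big_mkcond /=; apply: eq_bigr => i _; case: ifP => // hi.
rewrite divn_small //; apply: leq_trans (ltn_expl n (isT : (1 < 2)%N)) _.
by rewrite leq_pexp2l //; lia.
Qed.

Lemma s2_double n : s2 (n.*2) = s2 n.
Proof.
rewrite (@s2_ext _ (n.*2).+2) // big_ord_recl /= expn0 divn1 odd_double /=.
rewrite (@s2_ext n (n.*2).+1); last by lia.
apply: eq_bigr => i _; rewrite expnS divnMA; congr (odd (_ %/ _)); lia.
Qed.

Lemma s2_odd n : s2 (n.*2.+1) = (s2 n).+1.
Proof.
rewrite (@s2_ext _ (n.*2.+1).+1) // big_ord_recl /= expn0 divn1 /= odd_double /=.
rewrite (@s2_ext n (n.*2.+1)); last by lia.
congr (_.+1); apply: eq_bigr => i _; rewrite expnS divnMA; congr (odd (_ %/ _)); lia.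
Qed.

Definition f (n : nat) : 'F_2 := (s2 n)%:R.

Lemma natF2 k : (k %% 2)%:R = (k%:R : 'F_2).
Proof. by rewrite {2}(divn_eq k 2) natrD natrM two0 mulr0 add0r. Qed.

Lemma FserE n : Fser n = f n.
Proof.
rewrite /Fser /f /tm natF2; case: n => //.
by rewrite /s2 big_ord1.
Qed.

Lemma f_double n : f (n.*2) = f n.
Proof. by rewrite /f s2_double. Qed.
Lemma f_odd n : f (n.*2.+1) = 1 + f n.
Proof. by rewrite /f s2_odd -[(s2 n).+1]addn1 natrD addrC. Qed.
Lemma f0 : f 0 = 0.
Proof. by rewrite /f /s2 big_ord1. Qed.

Definition g (k : nat) : 'F_2 := if (2 %| k)%N then f (k %/ 2) else 0.
Lemma g_double k : g (k.*2) = f k.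
Proof. by rewrite /g -muln2 dvdn_mull // mulnK. Qed.
Lemma g_odd k : g (k.*2.+1) = 0.
Proof. by rewrite /g dvdn2 /= odd_double. Qed.

Definition ET (T : {poly 'F_2}) := (1 + 'X + 'X^2 + 'X^3) * T ^+ 2 + (1 + 'X^2) * T + 'X.

Lemma ET_trunc N : ceq N.+1 (ET (trunc Fser N)) 0.
Proof.
move=> i hi; set T := trunc Fser N.
have tE k : (k <= N)%N -> T`_k = f k by move=> hk; rewrite /T /trunc coef_poly ltnS hk FserE.
have hE k : (k <= N)%N -> (T^+2)`_k = g k.
  move=> hk; rewrite coef_sqr /g; case: ifP => // _; apply: tE; apply: leq_trans hk; exact: leq_div.
rewrite /ET !mulrDl !mul1r coef0 !coefD coefXM !coefXnM coefX.
case: i hi => [|[|[|j]]] hi /=.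
- rewrite hE ?tE // (g_double 0) f0; apply/eqP; by [].
- rewrite !hE ?tE // (g_odd 0) (g_double 0) (f_odd 0) f0.
  apply/eqP; by [].
- rewrite !hE ?tE; try lia.
  rewrite subnn (g_double 1) (g_odd 0) (f_double 1) f0.
  rewrite (g_double 0) f0.
  move: (f 1) => x; case: (F2cases x) => ->; apply/eqP; by [].
rewrite !subSS !subn0 !hE ?tE ?addr0; try lia.
have [m [-> | ->]] : exists m, j = m.*2 \/ j = m.*2.+1.
  elim: j {hi} => [|j [m [->|->]]]; first by exists 0%N; left.
    by exists m; right.
  by exists m.+1; left; rewrite doubleS.
- rewrite -!doubleS !g_double !g_odd !f_odd.
  move: (f m) (f m.+1) => x y.
  by case: (F2cases x) => ->; case: (F2cases y) => ->; apply/eqP.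
- rewrite -!doubleS !g_double !g_odd !f_double.
  move: (f m.+1) (f m.+2) => x y.
  by case: (F2cases x) => ->; case: (F2cases y) => ->; apply/eqP.
Qed.

Lemma compE (A B : fps) n : Defs.comp A B n = ((trunc A n) \Po (trunc B n))`_n.
Proof.
rewrite coef_comp_poly /Defs.comp; symmetry.
rewrite (big_ord_widen n.+1 (fun i => (trunc A n)`_i * ((trunc B n)^+i)`_n) (size_poly _ _)).
rewrite big_mkcond /=; apply: eq_bigr => i _.
have -> : A i = (trunc A n)`_i by rewrite /trunc coef_poly ltn_ord.
case: ifP => // hi; rewrite nth_default ?mul0r // leqNgt; exact: negbT hi.
Qed.

Definition Psi (Q : {poly 'F_2}) := 'X^3 * Q ^+ 4 + (1 + 'X) * Q + 'X + 'X^3.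

Lemma Psi_trunc (c : fps) : comp_inverse Fser c -> forall N, ceq N.+1 (Psi (trunc c N)) 0.
Proof.
case=> c0 [hF _] N; set Q := trunc c N; set T := trunc Fser N.
have Q0 : Q`_0 = 0 by rewrite /Q /trunc coef_poly c0.
have hTQ : ceq N.+1 (T \Po Q) 'X.
  move=> i hi.
  have h1 : ceq i.+1 T (trunc Fser i).
    by move=> k hk; rewrite /T /trunc !coef_poly hk (leq_trans hk hi).
  have h2 : ceq i.+1 Q (trunc c i).
    by move=> k hk; rewrite /Q /trunc !coef_poly hk (leq_trans hk hi).
  have := ceq_trans (ceq_compl h1 Q0) (ceq_compr (trunc Fser i) h2).
  move/(_ i (ltnSn i)) ->; rewrite -compE hF /Xser coefX; by case: (i == 1%N).
have hE : ceq N.+1 (ET T \Po Q) 0.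
  by have := ceq_compl (@ET_trunc N) Q0; rewrite comp_poly0.
have eqC : ET T \Po Q = (1 + Q + Q^+2 + Q^+3) * (T \Po Q)^+2 + (1 + Q^+2) * (T \Po Q) + Q.
  rewrite /ET [T ^+ 2]expr2 !(comp_polyD, comp_polyM, comp_polyX, comp_Xn_poly) (comp_poly_multiplicative Q).2; ring.
have hC : ceq N.+1 ((1 + Q + Q^+2 + Q^+3) * 'X^2 + (1 + Q^+2) * 'X + Q) 0.
  apply: ceq_trans hE; rewrite eqC.
  apply: ceqD => //; apply: ceqD; apply: ceqM => //; last exact: ceq_sym.
  exact: ceqX (ceq_sym hTQ).
have hPsi : Psi Q = ((1 + Q + Q^+2 + Q^+3) * 'X^2 + (1 + Q^+2) * 'X + Q) * ('X * Q + 1 + 'X).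
  have -> : Psi Q = ((1 + Q + Q^+2 + Q^+3) * 'X^2 + (1 + Q^+2) * 'X + Q) * ('X * Q + 1 + 'X)
     - 2%:R * ('X^3 * Q + 'X^2 + 'X^3 * Q^+2 + 'X^2 * Q + 'X^3 * Q^+3 + 'X^2 * Q^+2 + 'X^2 * Q^+3 + 'X * Q^+2).
    by rewrite /Psi; ring.
  by rewrite two0P mul0r subr0.
by rewrite hPsi; have := ceqMl ('X * Q + 1 + 'X) hC; rewrite mul0r.
Qed.

Lemma Psi_coef (c : fps) : comp_inverse Fser c -> forall i,
  (if (i < 3)%N then 0 else if (4 %| i - 3)%N then c ((i - 3) %/ 4)%N else 0)
  + c i + (if i == 0%N then 0 else c i.-1) + (i == 1%N)%:R + (i == 3%N)%:R = 0.
Proof.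
move=> hc i; have := Psi_trunc hc (ltnSn i); rewrite /Psi.
rewrite !mulrDl mul1r !coefD coefXnM coef_4 coefXM coefX coefXn coef0.
have cE k : (k <= i)%N -> (trunc c i)`_k = c k by move=> hk; rewrite /trunc coef_poly ltnS hk.
have e1 : (if (i < 3)%N then 0 else if (4 %| i - 3)%N then (trunc c i)`_((i - 3) %/ 4) else 0)
   = (if (i < 3)%N then 0 else if (4 %| i - 3)%N then c ((i - 3) %/ 4)%N else 0).
  case: ifP => // _; case: ifP => // _; rewrite cE //.
  exact: leq_trans (leq_div _ _) (leq_subr _ _).
have e2 : (if i == 0%N then 0 else (trunc c i)`_i.-1) = (if i == 0%N then 0 else c i.-1).
  by case: ifP => // _; rewrite cE // leq_pred.
by rewrite e1 e2 cE // addrA.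
Qed.
Local Open Scope nat_scope.

Fixpoint bf (k n : nat) : nat :=
  if k is k'.+1 then
    (if (n < 3)%N then n else 4 * bf k' (2 * ((n - 3) %/ 4) + 1) + 3 + (n - 3) %% 4)%N
  else n.
Definition b n := bf n n.

Lemma bf_stable k1 k2 n : (n <= k1)%N -> (n <= k2)%N -> bf k1 n = bf k2 n.
Proof.
elim: k1 k2 n => [|k1 IH] [|k2] n h1 h2 //=.
- by move: h1; rewrite leqn0 => /eqP ->.
- by move: h2; rewrite leqn0 => /eqP ->.
case: ifP => // h; congr (4 * _ + 3 + _)%N; apply: IH; lia.
Qed.

Lemma bE n : b n = (if (n < 3)%N then n else 4 * b (2 * ((n - 3) %/ 4) + 1) + 3 + (n - 3) %% 4)%N.
Proof.
rewrite /b; case: n => [|n] //=; case: ifP => // h.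
congr (4 * _ + 3 + _)%N; apply: bf_stable; lia.
Qed.

Lemma bR j r : (r < 4)%N -> b (4 * j + 3 + r) = (4 * b (2 * j + 1) + 3 + r)%N.
Proof.
move=> hr; rewrite bE ifF; last by lia.
have -> : ((4 * j + 3 + r - 3) %/ 4 = j)%N by lia.
have -> : ((4 * j + 3 + r - 3) %% 4 = r)%N by lia.
by [].
Qed.

Lemma b0 : b 0 = 0%N. Proof. by []. Qed.
Lemma b1 : b 1 = 1%N. Proof. by []. Qed.
Lemma b2 : b 2 = 2%N. Proof. by []. Qed.

Lemma bS n : (b n < b n.+1)%N.
Proof.
elim/ltn_ind: n => n IH.
case: n IH => [|[|[|n]]] IH; rewrite ?b0 ?b1 ?b2 //.
have [j [r [hr e]]] : exists j r, (r < 4)%N /\ n.+3 = (4 * j + 3 + r)%N.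
  by exists ((n.+3 - 3) %/ 4)%N, ((n.+3 - 3) %% 4)%N; split; lia.
rewrite e; case: (ltnP r 3) => hr3.
  by rewrite -addnS !bR //; lia.
have -> : ((4 * j + 3 + r).+1 = 4 * j.+1 + 3 + 0)%N by lia.
rewrite (@bR j.+1 0) // (@bR j r) //.
have h1 : b (2 * j + 1) < b (2 * j + 2).
  have := IH (2 * j + 1) ltac:(lia); by rewrite (_ : (2 * j + 1).+1 = 2 * j + 2); last lia.
have h2 : b (2 * j + 2) < b (2 * j + 2 + 1).
  have := IH (2 * j + 2) ltac:(lia); by rewrite (_ : (2 * j + 2).+1 = 2 * j + 2 + 1); last lia.
have -> : (2 * j.+1 + 1 = 2 * j + 2 + 1)%N by lia.
lia.
Qed.

Lemma bmono i j : (i < j)%N -> (b i < b j)%N.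
Proof. exact: (homo_ltn ltn_trans bS). Qed.

Lemma bmonoR i j : (b i < b j)%N -> (i < j)%N.
Proof.
move=> h; case: (ltngtP i j) => // [/bmono|e]; first by lia.
by move: h; rewrite e ltnn.
Qed.

Lemma binj i j : b i = b j -> i = j.
Proof.
move=> e; case: (ltngtP i j) => // /bmono; by rewrite e ltnn.
Qed.

Lemma bEven j : b (2 * j + 2) = (b (2 * j + 1)).+1.
Proof.
case: j => [|j]; first by [].
rewrite bE (bE (2 * j.+1 + 1)) !ifF; try lia.
have -> : ((2 * j.+1 + 2 - 3) %/ 4 = (2 * j.+1 + 1 - 3) %/ 4)%N by lia.
have -> : ((2 * j.+1 + 2 - 3) %% 4 = ((2 * j.+1 + 1 - 3) %% 4).+1)%N by lia.
lia.
Qed.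

Local Open Scope ring_scope.

Lemma F01 : (0 : 'F_2) <> 1. Proof. by move/eqP. Qed.

Section CFacts.
Variable c : fps.
Hypothesis hc : comp_inverse Fser c.

Lemma c0 : c 0%N = 0. Proof. by case: hc. Qed.

Lemma c1 : c 1%N = 1.
Proof.
have := Psi_coef hc 1; rewrite /= c0 !addr0 add0r.
by case: (F2cases (c 1%N)) => -> //; rewrite add0r => /esym/F01.
Qed.

Lemma c2 : c 2%N = 1.
Proof.
have := Psi_coef hc 2; rewrite /= c1 !addr0 add0r.
by case: (F2cases (c 2%N)) => -> //; rewrite add0r.
Qed.

Lemma c3 : c 3%N = 0.
Proof.
have := Psi_coef hc 3; rewrite /= c2 c0 !addr0 add0r.
by case: (F2cases (c 3%N)) => -> //; move/eqP.
Qed.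

Lemma cstep m : (4 <= m)%N -> ~~ (4 %| m - 3)%N -> c m = c m.-1.
Proof.
move=> h4 hd; have := Psi_coef hc m.
rewrite ifF; last by lia.
rewrite (negbTE hd) ifF; last by lia.
have -> : (m == 1%N) = false by apply/eqP; lia.
have -> : (m == 3%N) = false by apply/eqP; lia.
rewrite !addr0 add0r.
by case: (F2cases (c m)) => ->; case: (F2cases (c m.-1)) => -> //; move/eqP.
Qed.

Lemma cjump q : c (4 * q + 7)%N = c (4 * q + 6)%N + c q.+1.
Proof.
have := Psi_coef hc (4 * q + 7).
rewrite ifF; last by lia.
have -> : (4 %| 4 * q + 7 - 3)%N.
  by rewrite (_ : 4 * q + 7 - 3 = 4 * q.+1)%N ?dvdn_mulr //; lia.
have -> : ((4 * q + 7 - 3) %/ 4 = q.+1)%N by lia.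
have -> : (4 * q + 7 == 0)%N = false by apply/eqP; lia.
have -> : (4 * q + 7 == 1)%N = false by apply/eqP; lia.
have -> : (4 * q + 7 == 3)%N = false by apply/eqP; lia.
have -> : (4 * q + 7).-1 = (4 * q + 6)%N by lia.
rewrite !addr0.
by case: (F2cases (c q.+1)) => ->; case: (F2cases (c (4 * q + 7)%N)) => ->;
   case: (F2cases (c (4 * q + 6)%N)) => ->; move=> h; apply/eqP; move/eqP: h; apply/implyP.
Qed.

Lemma cflat q r : (r < 4)%N -> c (4 * q + 3 + r)%N = c (4 * q + 3)%N.
Proof.
elim: r => [|r IH] hr; first by rewrite addn0.
have h1 : (4 <= 4 * q + 3 + r.+1)%N by lia.
have h2 : ~~ (4 %| 4 * q + 3 + r.+1 - 3)%N by apply/negP => /dvdnP [k hk]; lia.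
rewrite (cstep h1 h2).
rewrite (_ : (4 * q + 3 + r.+1).-1 = 4 * q + 3 + r)%N; last lia.
apply: IH; lia.
Qed.

Lemma keyD q :
  (forall k, (0 < k)%N -> (k <= q)%N -> (c k = 1 <-> exists2 n, (0 < n)%N & b n = k)) ->
  (c (4 * q + 3)%N = 1 <-> exists j, q = b (2 * j + 1)).
Proof.
elim: q => [|q IH] H.
  rewrite c3; split; first by move/F01.
  case=> j hj; have : (0 < 2 * j + 1)%N by lia.
  by move/bmono; rewrite -hj b0.
have IH' := IH (fun k h1 h2 => H k h1 (leqW h2)).
have HB := H q.+1 isT (leqnn _).
rewrite (_ : 4 * q.+1 + 3 = 4 * q + 7)%N; last lia.
rewrite cjump (_ : 4 * q + 6 = 4 * q + 3 + 3)%N; last lia.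
rewrite cflat //.
case: (F2cases (c (4 * q + 3)%N)) => e1; case: (F2cases (c q.+1)) => e2;
  rewrite e1 e2 in IH' HB *.
- rewrite addr0; split; first by move/F01.
  case=> j hj; apply HB.2; exists (2 * j + 1)%N; [lia | by rewrite hj].
- rewrite add0r; split => // _.
  have [n hn hbn] := HB.1 (erefl _).
  have [k [hk|hk]] : exists k, n = (2 * k + 1)%N \/ n = (2 * k + 2)%N.
    by exists ((n - 1) %/ 2)%N; lia.
  + by exists k; rewrite -hbn hk.
  + exfalso; apply: F01; apply IH'.2; exists k.
    by move: hbn; rewrite hk bEven => [[->]].
- exfalso; have [j hj] := IH'.1 (erefl _).
  have [_ h] := HB; apply: F01; apply: h; exists (2 * j + 2)%N; [lia | by rewrite bEven hj].
- have -> : (1 + 1 : 'F_2) = 0 by apply/eqP.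
  split; first by move/F01.
  case=> j hj; have [i hi] := IH'.1 (erefl _).
  have := bEven i; rewrite -hi hj => /binj; lia.
Qed.

Lemma char_c m : (0 < m)%N -> (c m = 1 <-> exists2 n, (0 < n)%N & b n = m).
Proof.
elim/ltn_ind: m => m IH hm.
case: m IH hm => [|[|[|m]]] IH hm //.
- by rewrite c1; split => // _; exists 1%N.
- by rewrite c2; split => // _; exists 2%N.
set q := ((m.+3 - 3) %/ 4)%N; set r := ((m.+3 - 3) %% 4)%N.
have em : m.+3 = (4 * q + 3 + r)%N by rewrite /q /r; lia.
have hr : (r < 4)%N by rewrite /r; lia.
rewrite em cflat //.
rewrite keyD; last by move=> k hk1 hk2; apply: IH => //; lia.
split.
  by case=> j hj; exists (4 * j + 3 + r)%N; [lia | rewrite bR // -hj].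
case=> n hn hbn.
have n3 : (3 <= n)%N.
  case: n hn hbn => [|[|[|n]]] //= _; rewrite ?b1 ?b2; lia.
have [j [r' [hr' en]]] : exists j r', (r' < 4)%N /\ n = (4 * j + 3 + r')%N.
  by exists ((n - 3) %/ 4)%N, ((n - 3) %% 4)%N; split; lia.
exists j; move: hbn; rewrite en bR //; lia.
Qed.

End CFacts.

Lemma enum_uniq (a a' : nat -> nat) :
  a 0%N = 0%N -> a' 0%N = 0%N ->
  (forall n, (a n < a n.+1)%N) -> (forall n, (a' n < a' n.+1)%N) ->
  (forall m, (1 <= m)%N -> ((exists2 n, (0 < n)%N & a n = m) <-> (exists2 n, (0 < n)%N & a' n = m))) ->
  forall n, a n = a' n.
Proof.
move=> a0 a'0 ha ha' hr.
have ma := homo_ltn ltn_trans ha; have ma' := homo_ltn ltn_trans ha'.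
have rev (f : nat -> nat) : {homo f : i j / (i < j)%N} -> forall i j, (f i < f j)%N -> (i < j)%N.
  move=> mf i j h; case: (ltngtP i j) => // [/mf|e]; first by lia.
  by move: h; rewrite e ltnn.
elim/ltn_ind => n IH.
case: n IH => [|n] IH; first by rewrite a0 a'0.
case: (ltngtP (a n.+1) (a' n.+1)) => // h.
- have pos : (1 <= a n.+1)%N by have := ma 0%N n.+1 isT; lia.
  have [m hm e] := (hr _ pos).1 (ex_intro2 _ _ n.+1 isT erefl).
  have hmn : (m < n.+1)%N by apply: (rev a' ma'); rewrite e.
  by move: e; rewrite -IH // => /esym e; move: (ma m n.+1 hmn); rewrite e ltnn.
- have pos : (1 <= a' n.+1)%N by have := ma' 0%N n.+1 isT; lia.
  have [m hm e] := (hr _ pos).2 (ex_intro2 _ _ n.+1 isT erefl).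
  have hmn : (m < n.+1)%N by apply: (rev a ma); rewrite e.
  by move: e; rewrite IH // => /esym e; move: (ma' m n.+1 hmn); rewrite e ltnn.
Qed.

Local Close Scope ring_scope.

Theorem mainTheorem6 (c : fps) (a : nat -> nat) :
  comp_inverse Fser c -> enumerates c a ->
  [/\ a 1 = 1, a 2 = 2, a 3 = 7 &
   forall n, 1 <= n ->
   [/\ a (4 * n) = a (4 * n - 1) + 1,
       a (4 * n + 1) = a (4 * n - 1) + 2,
       a (4 * n + 2) = a (4 * n - 1) + 3,
       a (8 * n + 3) = a (8 * n) + 7 &
       a (8 * n + 7) = 4 * a (4 * n + 3) + 3]]%N.
Proof.
move=> hc [a0 [ha hr]].
have ab : forall n, a n = b n.
  apply: enum_uniq => //; [exact: bS|] => m hm.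
  by rewrite -hr // char_c.
have b3 : b 3 = 7%N by [].
rewrite !ab b1 b2 b3; split => // n hn.
have [k ->] : exists k, n = k.+1 by exists n.-1; lia.
have E r : (r < 4)%N -> b (4 * k + 3 + r) = (4 * b (2 * k + 1) + 3 + r)%N by move=> hr4; apply: bR.
rewrite !ab.
have -> : (4 * k.+1 - 1 = 4 * k + 3 + 0)%N by lia.
have -> : (4 * k.+1 + 1 = 4 * k + 3 + 2)%N by lia.
have -> : (4 * k.+1 + 2 = 4 * k + 3 + 3)%N by lia.
have -> : (4 * k.+1 + 3 = 4 * (k + 1) + 3 + 0)%N by lia.
have -> : (4 * k.+1 = 4 * k + 3 + 1)%N by lia.
have -> : (8 * k.+1 + 3 = 4 * (2 * k + 2) + 3 + 0)%N by lia.
have -> : (8 * k.+1 + 7 = 4 * (2 * k + 3) + 3 + 0)%N by lia.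
have -> : (8 * k.+1 = 4 * (2 * k + 1) + 3 + 1)%N by lia.
rewrite !bR //.
have -> : (2 * (2 * k + 2) + 1 = 4 * k + 3 + 2)%N by lia.
have -> : (2 * (2 * k + 1) + 1 = 4 * k + 3 + 0)%N by lia.
have -> : (2 * (2 * k + 3) + 1 = 4 * (k + 1) + 3 + 0)%N by lia.
rewrite !bR //.
split; lia.
Qed.
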